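(* Let $a,b\in\mathbb{Z}$ with $b$ a perfect square, and suppose $\mathcal{F}(x)=x^8+ax^4+b$ is monogenic. Then $b=1$. Consequently, since the groups 8T11 and 8T22 arise as Galois groups of irreducible $\mathcal{F}$ only when $b$ is a square and $\sqrt b$ is not a square, there is no monogenic $\mathcal{F}(x)$ whose Galois group is 8T11 or 8T22.
   Context: A monic polynomial $f(x)\in\mathbb{Z}[x]$ is monogenic if it is irreducible over $\mathbb{Q}$ and $\mathbb{Z}[\theta]$ is the ring of integers of $\mathbb{Q}(\theta)$, $f(\theta)=0$. 8T$X$ is the $X$-th transitive subgroup of $S_8$ in the standard numbering; 8T11 $\cong C_4\circ D_4$, 8T22 $\cong D_4\circ D_4$. Galois groups are over $\mathbb{Q}$. *)

(* Defs.v *)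
From mathcomp Require Import all_boot all_order all_algebra all_field.
Set Implicit Arguments. Unset Strict Implicit. Unset Printing Implicit Defensive.
Import GRing.Theory Num.Theory.
Local Open Scope ring_scope.

Definition Fpoly (a b : int) : {poly int} := 'X^8 + a%:P * 'X^4 + b%:P.

Definition in_Zadj (theta x : algC) : Prop :=
  exists p : {poly int}, x = (map_poly intr p).[theta].

Definition in_Qadj (theta x : algC) : Prop :=
  exists q : {poly rat}, x = (map_poly ratr q).[theta].

Definition in_ring_of_integers (theta x : algC) : Prop :=
  in_Qadj theta x /\ x \in Aint.

Definition monogenic (f : {poly int}) : Prop :=
  [/\ f \is monic,
      irreducible_poly (map_poly intr f : {poly rat}) &
      forall theta : algC, root (map_poly intr f) theta ->
        forall x : algC, in_Zadj theta x <-> in_ring_of_integers theta x].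

(* Main.v *)
Require Import Defs.
From mathcomp Require Import all_boot all_order all_algebra all_field.
From mathcomp Require Import zify ring lra.
Import GRing.Theory Num.Theory.
Local Open Scope ring_scope.

Lemma mapF_alg (p : {poly int}) :
  map_poly (ratr : rat -> algC) (map_poly (intr : int -> rat) p) = map_poly intr p.
Proof.
rewrite -map_poly_comp; apply: eq_map_poly => x /=; exact: ratr_int.
Qed.

Lemma root_zero (P g : {poly rat}) (t : algC) :
  irreducible_poly P -> root (map_poly ratr P) t -> (size g < size P)%N ->
  root (map_poly ratr g) t -> g = 0.
Proof.
move=> irrP rP sg rg; apply/eqP; apply: contraT => gn0.
have := root_gcd (map_poly ratr P) (map_poly ratr g) t.
rewrite rP rg -gcdp_map /= => hr.
case: (eqVneq (size (gcdp P g)) 1%N) => hs.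
  move/eqP/size_poly1P: hs => [k k0 hk].
  by move: hr; rewrite hk map_polyC rootC fmorph_eq0 (negbTE k0).
have eqd := irrP.2 _ hs (dvdp_gcdl P g).
have : P %| g by rewrite -(eqp_dvdl _ eqd) dvdp_gcdr.
move/(dvdp_leq gn0); rewrite leqNgt sg //.
Qed.

Lemma cr_sq (c r : int) : c * r = -1 -> c ^+ 2 = 1.
Proof.
move=> h. have := congr1 absz h; rewrite abszM /= => /eqP.
rewrite muln_eq1 => /andP[/eqP hc _].
by rewrite -real_normK ?num_real // -abszE hc.
Qed.

Lemma size_Fpoly a b : size (Fpoly a b) = 9%N.
Proof.
rewrite /Fpoly -addrA size_polyDl size_polyXn //.
apply: leq_ltn_trans (size_polyD _ _) _; rewrite gtn_max.
apply/andP; split; last by apply: leq_ltn_trans (size_polyC_leq1 _) _.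
apply: leq_ltn_trans (size_polyMleq _ _) _; rewrite size_polyXn.
have := size_polyC_leq1 a; move: (size _) => n h; rewrite addnS /= ltnS; exact: leq_trans (leq_add h (leqnn _)) _.
Qed.

Theorem mainTheorem4 (a b : int) :
  (exists c : int, b = c ^+ 2) -> monogenic (Fpoly a b) -> b = 1.
Proof.
move=> [c ->] [mon irr hroot].
set F := Fpoly a (c ^+ 2) in mon irr hroot *.
have sF : size F = 9%N by apply: size_Fpoly.
have sFQ : size (map_poly (intr : int -> rat) F) = 9%N.
  by rewrite size_map_inj_poly //; apply: intr_inj.
have F0 : F.[0] = c ^+ 2.
  by rewrite /F /Fpoly !(hornerD, hornerM, hornerXn, hornerC) hornerX !mul0r mulr0 !add0r.
have c0 : c != 0.
  apply: contraT; rewrite negbK => /eqP c0.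
  have hd : ('X - 0%:P) %| map_poly (intr : int -> rat) F.
    rewrite dvdp_XsubCl /root -(rmorph0 (intr : int -> rat)) horner_map F0 c0.
    by rewrite expr0n /= rmorph0.
  have := irr.2 _ _ hd; rewrite size_XsubC => /(_ isT) /eqp_size.
  by rewrite sFQ size_XsubC.
have [t rt] : exists t : algC, root (map_poly intr F) t.
  by apply/closed_rootP; rewrite size_map_inj_poly ?sF //; apply: intr_inj.
have Et0 : t ^+ 8 + a%:~R * t ^+ 4 + (c ^+ 2)%:~R = 0 :> algC.
  move: rt; rewrite /root /F /Fpoly !rmorphD rmorphM /= !map_polyC !map_polyXn.
  by rewrite !hornerD hornerCM !hornerXn hornerC => /eqP.
have Et : t ^+ 8 + a%:~R * t ^+ 4 + (c%:~R) ^+ 2 = 0 :> algC.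
  by rewrite -Et0 rmorphXn.
have cc0 : (c%:~R : algC) != 0 by rewrite intr_eq0.
have t0 : t != 0.
  apply/eqP => t0; move: Et; rewrite t0 !expr0n /= mulr0 !add0r => /eqP.
  by rewrite sqrf_eq0 (negbTE cc0).
pose q : {poly rat} :=
  'X^2 - (c%:~R)^-1 *: 'X^6 - ((a%:~R) / (c%:~R)) *: 'X^2.
have hq : (map_poly ratr q).[t] = t ^+ 2 + c%:~R / t ^+ 2.
  rewrite /q !rmorphB /= !map_polyZ !map_polyXn.
  rewrite !(hornerD, hornerN, hornerZ, hornerXn) fmorphV fmorph_div !rmorph_int.
  apply/eqP; rewrite -subr_eq0; apply/eqP.
  transitivity (- (t ^+ 8 + a%:~R * t ^+ 4 + (c%:~R) ^+ 2) / ((c%:~R) * t ^+ 2)).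
    by field; rewrite t0 cc0.
  by rewrite Et oppr0 mul0r.
set u := (map_poly ratr q).[t] in hq.
have u2 : u ^+ 2 = (2 * c - a)%:~R.
  rewrite hq; apply/eqP; rewrite -subr_eq0; apply/eqP.
  transitivity ((t ^+ 8 + a%:~R * t ^+ 4 + (c%:~R) ^+ 2) / t ^+ 4).
    rewrite rmorphB rmorphM /=.
    by field.
  by rewrite Et mul0r.
have uA : u \in Aint.
  apply: (@root_monic_Aint ('X^2 - ((2 * c - a)%:~R)%:P)).
  - by rewrite /root hornerD hornerN hornerXn hornerC u2 subrr.
  - exact: monicXnsubC.
  - by rewrite polyOverXnsubC intr_int.
have [p hp] := (hroot t rt u).2 (conj (ex_intro _ q erefl) uA).
pose r := Pdiv.CommonRing.rmodp p F.
have hr : (map_poly intr r).[t] = u.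
  have hp' := Pdiv.RingMonic.rdivp_eq mon p.
  rewrite hp {1}hp' rmorphD rmorphM /= hornerD hornerM (rootP rt) mulr0 add0r.
  by [].
pose g := map_poly (intr : int -> rat) r - q.
have sg : (size g < size (map_poly (intr : int -> rat) F))%N.
  rewrite sFQ; apply: leq_ltn_trans (size_polyD _ _) _; rewrite size_polyN gtn_max.
  apply/andP; split.
    rewrite size_map_inj_poly //; last by apply: intr_inj.
    by rewrite -sF; apply: Pdiv.CommonRing.ltn_rmodpN0; apply: monic_neq0.
  have sz : forall (k : rat) n, (n < 8)%N -> (size (k *: ('X^n : {poly rat})) < 9)%N.
    by move=> k n hn; apply: leq_ltn_trans (size_scale_leq _ _) _; rewrite size_polyXn.
  rewrite /q; apply: leq_ltn_trans (size_polyD _ _) _; rewrite size_polyN gtn_max sz // andbT.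
  by apply: leq_ltn_trans (size_polyD _ _) _; rewrite size_polyN gtn_max sz // size_polyXn.
have rg : root (map_poly ratr g) t.
  by rewrite /root rmorphB /= mapF_alg hornerD hornerN hr -/u subrr.
have rF : root (map_poly ratr (map_poly (intr : int -> rat) F)) t by rewrite mapF_alg.
have g0 := @root_zero _ g t irr rF sg rg.
have := congr1 (fun p : {poly rat} => p`_6) g0.
rewrite /g /q !coefB coef_map !coefZ !coefXn coef0 /=.
rewrite !mulr0 mulr1 !subr0 sub0r opprK => h6.
have qc0 : (c%:~R : rat) != 0 by rewrite intr_eq0.
have : ((c * r`_6)%:~R : rat) = (-1)%:~R.
  rewrite intrM /=; apply/eqP; rewrite -subr_eq0; apply/eqP.
  transitivity (c%:~R * ((r`_6)%:~R + (c%:~R)^-1) : rat).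
    by field.
  by rewrite h6 mulr0.
by move/intr_inj; apply: cr_sq.
Qed.
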